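(* Let $G$ be a finite non-singular graph. Then $\mathcal{A}_{RW}(G)\cong\mathcal{A}(G)$ (as algebras) if and only if $G$ is a regular graph or a biregular graph. Moreover, if $\mathcal{A}_{RW}(G)\not\cong\mathcal{A}(G)$, then the only algebra homomorphism between them is the null map.
   Context: Graphs are simple (no loops or multiple edges) and connected; here $G=(V,E)$ has finitely many vertices $V=\{1,\dots,n\}$. The adjacency matrix is $A=(a_{ij})$ with $a_{ij}=1$ if $i,j$ are neighbors and $0$ otherwise; $G$ is non-singular if $\det A\neq 0$. $\deg(i)$ is the number of neighbors of $i$. $G$ is $d$-regular if every vertex has degree $d$, and regular if it is $d$-regular for some $d$. $G$ is bipartite if $V$ splits into disjoint $V_1,V_2$ with every edge joining $V_1$ to $V_2$; $G$ is biregular if it is bipartite with such a bipartition in which any two vertices on the same side have the same degree. An evolution algebra over $\mathbb{R}$ is an algebra with a basis $\{e_i\}$ (natural basis) such that $e_i\cdot e_j=0$ for $i\ne j$ and $e_i\cdot e_i=\sum_k c_{ik}e_k$. $\mathcal{A}(G)$ has natural basis $\{e_i:i\in V\}$ with $e_i\cdot e_i=\sum_{k\in V}a_{ik}e_k$; $\mathcal{A}_{RW}(G)$ has natural basis $\{e_i:i\in V\}$ with $e_i\cdot e_i=\sum_{k\in V}\frac{a_{ik}}{\deg(i)}e_k$; in both, $e_i\cdot e_j=0$ for $i\neq j$. An isomorphism is a bijective linear map $f$ with $f(u\cdot v)=f(u)\cdot f(v)$. *)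

(* Defs.v *)
From HB Require Import structures.
From mathcomp Require Import all_boot all_order all_algebra.
From mathcomp Require Import reals.
Set Implicit Arguments. Unset Strict Implicit. Unset Printing Implicit Defensive.
Import Order.TTheory GRing.Theory Num.Theory.
Local Open Scope ring_scope.

Definition simple_graph n (e : rel 'I_n) : Prop :=
  symmetric e /\ irreflexive e.

Definition connected_graph n (e : rel 'I_n) : Prop :=
  forall i j : 'I_n, connect e i j.

Definition deg n (e : rel 'I_n) (i : 'I_n) : nat := #|[set j | e i j]|.

Definition adjmx (R : nzRingType) n (e : rel 'I_n) : 'M[R]_n :=
  \matrix_(i, j) (e i j)%:R.

Definition rwmx (R : fieldType) n (e : rel 'I_n) : 'M[R]_n :=
  \matrix_(i, j) ((e i j)%:R / (deg e i)%:R).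

Definition nonsingular_graph (R : nzRingType) n (e : rel 'I_n) : Prop :=
  \det (adjmx R e) != 0.

Definition regular_graph n (e : rel 'I_n) : Prop :=
  exists d : nat, forall i, deg e i = d.

Definition biregular_graph n (e : rel 'I_n) : Prop :=
  exists V1 : {set 'I_n},
    (forall i j, e i j -> (i \in V1) != (j \in V1)) /\
    (forall i j, (i \in V1) = (j \in V1) -> deg e i = deg e j).

(* The evolution algebra with structure matrix C on R^n (row vectors in
   the natural basis e_i): e_i e_j = 0 (i<>j), e_i e_i = sum_k C i k e_k.
   Hence (u v)_k = sum_i u_i v_i C_ik. *)
Definition evo_mul (R : nzRingType) n (C : 'M[R]_n) (u v : 'rV[R]_n) : 'rV[R]_n :=
  \row_k \sum_i u 0 i * v 0 i * C i k.

Definition evo_hom (R : nzRingType) n (C1 C2 : 'M[R]_n) (f : 'rV[R]_n -> 'rV[R]_n) : Prop :=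
  (forall (a : R) u v, f (a *: u + v) = a *: f u + f v) /\
  (forall u v, f (evo_mul C1 u v) = evo_mul C2 (f u) (f v)).

Definition evo_iso (R : nzRingType) n (C1 C2 : 'M[R]_n) : Prop :=
  exists f : 'rV[R]_n -> 'rV[R]_n, bijective f /\ evo_hom C1 C2 f.

(* Main.v *)
Require Import Defs.
From mathcomp Require Import all_boot all_order all_algebra.
From mathcomp Require Import reals.
From mathcomp Require Import ring lra fingroup perm.
Set Implicit Arguments. Unset Strict Implicit. Unset Printing Implicit Defensive.
Import Order.TTheory GRing.Theory Num.Theory.
Local Open Scope ring_scope.
From Stdlib Require Import FunctionalExtensionality.

Lemma cbrt (R : rcfType) (y : R) : 0 < y -> exists2 x : R, 0 < x & x ^+ 3 = y.
Proof.
move=> y0.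
have := @poly_ivt R ('X^3 - y%:P) 0 (1 + y).
rewrite !hornerE /= expr0n /= sub0r oppr_le0 (ltW y0) /=.
case.
- lra.
- rewrite subr_ge0.
  have h1 : 1 + y <= (1 + y) ^+ 3.
    rewrite -[X in X <= _]expr1; apply: ler_eXn2l => //; lra.
  by apply: le_trans h1; lra.
move=> x /andP[x0 _] /rootP; rewrite !hornerE => /eqP; rewrite subr_eq0 => /eqP hx.
exists x => //.
rewrite lt_neqAle x0 andbT; apply/eqP=> x0'; move: hx; rewrite -x0' expr0n /= => hy.
by move: y0; rewrite -hy ltxx.
Qed.

Section Hom.
Variables (R : fieldType) (n : nat) (C1 C2 : 'M[R]_n) (f : 'rV[R]_n -> 'rV[R]_n).
Hypothesis hf : evo_hom C1 C2 f.

Let E (i : 'I_n) : 'rV[R]_n := delta_mx 0 i.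

Lemma evo_mul_delta C i j :
  evo_mul C (E i) (E j) = if i == j then row i C else 0.
Proof.
apply/rowP => k; rewrite /E !mxE (bigD1 i) //= big1 => [|l /negbTE li].
  rewrite !mxE !eqxx /= addr0 mul1r.
  have [eij|nij] := eqVneq i j.
    by rewrite !mxE mul1r.
  by rewrite !mxE mul0r.
by rewrite !mxE li andbF !mul0r.
Qed.

Lemma hf0 : f 0 = 0.
Proof.
case: hf => hl _; have := hl 1 0 0; rewrite !scale1r addr0 => h.
by apply: (addrI (f 0)); rewrite addr0 -h.
Qed.

Lemma hfD u v : f (u + v) = f u + f v.
Proof. by case: hf => hl _; have := hl 1 u v; rewrite !scale1r. Qed.

Lemma hfZ a u : f (a *: u) = a *: f u.
Proof. by case: hf => hl _; rewrite -[a *: u]addr0 hl hf0 addr0. Qed.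

Lemma hf_expand u : f u = \sum_i u 0 i *: f (E i).
Proof.
rewrite {1}(row_sum_delta u) (big_morph f hfD hf0).
by apply: eq_bigr => i _; rewrite hfZ.
Qed.

Definition FF i k := f (E i) 0 k.

Lemma E1 : C2 \in unitmx -> forall i j k, i != j -> FF i k * FF j k = 0.
Proof.
move=> uC i j k ij.
case: hf => _ hm; have := hm (E i) (E j); rewrite evo_mul_delta (negbTE ij) hf0 => h.
pose w : 'rV[R]_n := \row_k (FF i k * FF j k).
have hw : w *m C2 = 0.
  rewrite h; apply/rowP => l; rewrite !mxE.
  by apply: eq_bigr => m _; rewrite !mxE.
have : w = 0 by rewrite -(mulmxK uC w) hw mul0mx.
by move/rowP/(_ k); rewrite !mxE.
Qed.

Lemma E2 i l : \sum_k C1 i k * FF k l = \sum_k FF i k * FF i k * C2 k l.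
Proof.
case: hf => _ hm; have := hm (E i) (E i); rewrite evo_mul_delta eqxx.
rewrite hf_expand => /(congr1 (fun v : 'rV[R]_n => v 0 l)).
rewrite !mxE summxE => <-; apply: eq_bigr => k _; rewrite !mxE.
done.
Qed.

Lemma zero_row_closed : C2 \in unitmx -> forall i k, C1 i k != 0 ->
  (forall l, FF i l = 0) -> forall l, FF k l = 0.
Proof.
move=> uC i k hik zi l; apply/eqP/negP => /negP nz.
have := E2 i l; rewrite [RHS]big1 => [|m _]; last by rewrite zi !mul0r.
rewrite (bigD1 k) //= big1 => [|m mk]; last first.
  have := E1 uC l mk => /eqP; rewrite mulf_eq0 (negbTE nz) orbF => /eqP ->.
  by rewrite mulr0.
by rewrite addr0 => /eqP; rewrite mulf_eq0 (negbTE hik) (negbTE nz).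
Qed.

Lemma hom_struct (e : rel 'I_n) : C2 \in unitmx -> symmetric e -> connected_graph e ->
  (forall i k, e i k -> C1 i k != 0) ->
  f = (fun _ => 0) \/ exists (s : {perm 'I_n}) (lam : 'I_n -> R),
    (forall i, lam i != 0) /\ forall i j, C1 i j * lam j = lam i ^+ 2 * C2 (s i) (s j).
Proof.
move=> uC sym conn hC.
case: (boolP [exists i, [forall l, FF i l == 0]]) => [/existsP[i0 /forallP z0]| nz].
  left.
  have cl : closed e [pred i | [forall l, FF i l == 0]].
    move=> x y exy; rewrite !inE; apply/idP/idP => /forallP zx; apply/forallP => l'; apply/eqP.
    - exact: (zero_row_closed uC (hC _ _ exy) (fun l => eqP (zx l))).
    - have eyx : e y x by rewrite sym.
      exact: (zero_row_closed uC (hC _ _ eyx) (fun l => eqP (zx l))).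
  have allz : forall i l, FF i l = 0.
    move=> i l; have := closed_connect cl (conn i0 i); rewrite !inE.
    have -> : [forall l, FF i0 l == 0] by apply/forallP.
    by move=> /esym /forallP /(_ l) /eqP.
  apply: functional_extensionality => u; rewrite hf_expand big1 // => i _.
  have -> : f (E i) = 0 by apply/rowP => l; rewrite mxE; apply: allz.
  by rewrite scaler0.
right.
have nzr : forall i, exists k, FF i k != 0.
  move=> i; move: nz; rewrite negb_exists => /forallP/(_ i).
  by rewrite negb_forall => /existsP.
pose pi i := odflt i [pick k | FF i k != 0].
have hpi : forall i, FF i (pi i) != 0.
  move=> i; rewrite /pi; case: pickP => [k //|h].
  by case: (nzr i) => k; rewrite h.
have inj : injective pi.
  move=> i j eq; apply/eqP/negP => /negP nij.
  have := E1 uC (pi i) nij; rewrite {2}eq => /eqP.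
  by rewrite mulf_eq0 (negbTE (hpi i)) (negbTE (hpi j)).
pose s := perm inj.
have sE : forall i, s i = pi i by move=> i; rewrite /s permE.
pose lam i := FF i (s i).
have Fform : forall i k, FF i k = if k == s i then lam i else 0.
  move=> i k; case: eqP => [-> //|ne]; apply/eqP/negP => /negP nz'.
  pose j := (s^-1)%g k.
  have kj : k = s j by rewrite /j permKV.
  have ij : i != j by apply/eqP => ij; apply: ne; rewrite kj ij.
  have := E1 uC k ij => /eqP; rewrite mulf_eq0 (negbTE nz') /= kj sE.
  by rewrite (negbTE (hpi j)).
exists s, lam; split => [i|i j]; first by rewrite /lam sE hpi.
have := E2 i (s j).
rewrite (bigD1 j) //= big1 => [|k kj]; last first.
  by rewrite Fform (inj_eq perm_inj) eq_sym (negbTE kj) mulr0.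
rewrite (bigD1 (s i)) //= big1 => [|k ki]; last by rewrite Fform (negbTE ki) !mul0r.
by rewrite !Fform !eqxx !addr0 => ->; rewrite expr2.
Qed.

End Hom.

Definition NP n (e : rel 'I_n) := forall u v w, e u v -> e u w -> deg e v = deg e w.

Section Graph.
Variables (R : realType) (n : nat) (e : rel 'I_n).

Lemma deg_pos i j : e i j -> (0 < deg e i)%N.
Proof. by move=> eij; apply/card_gt0P; exists j; rewrite inE. Qed.

Lemma degR_neq0 i j : e i j -> (deg e i)%:R != 0 :> R.
Proof. by move=> eij; rewrite pnatr_eq0 -lt0n (deg_pos eij). Qed.

Lemma nb_of_nonsing : nonsingular_graph R e -> forall i, exists j, e i j.
Proof.
move=> ns i; case: (boolP [exists j, e i j]) => [/existsP //|].
rewrite negb_exists => /forallP h; exfalso.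
move: ns; rewrite /nonsingular_graph (expand_det_row _ i) big1 ?eqxx // => j _.
by rewrite mxE (negbTE (h j)) mul0r.
Qed.

Lemma unit_adj : nonsingular_graph R e -> adjmx R e \in unitmx.
Proof. by rewrite unitmxE unitfE. Qed.

Lemma unit_rw : nonsingular_graph R e -> rwmx R e \in unitmx.
Proof.
move=> ns; have nb := nb_of_nonsing ns.
have -> : rwmx R e = diag_mx (\row_i ((deg e i)%:R^-1 : R)) *m adjmx R e.
  by rewrite mul_diag_mx; apply/matrixP => i j; rewrite !mxE mulrC.
rewrite unitmxE unitfE det_mulmx mulf_neq0 // det_diag; apply/prodf_neq0 => i _.
by rewrite mxE invr_eq0; case: (nb i) => j /degR_neq0.
Qed.

Lemma NP_regbireg : symmetric e -> connected_graph e -> (forall i, exists j, e i j) ->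
  NP e -> regular_graph e \/ biregular_graph e.
Proof.
move=> sym conn nb np.
case: n e sym conn nb np => [|m] e' sym conn nb np.
  by left; exists 0%N => -[].
pose v0 : 'I_m.+1 := ord0.
pose nbr i := odflt i [pick j | e' i j].
have hnbr i : e' i (nbr i).
  rewrite /nbr; case: pickP => [//|h]; by case: (nb i) => j; rewrite h.
pose a := deg e' v0; pose b := deg e' (nbr v0).
have step : forall x y a b, e' x y -> deg e' x = a -> (forall j, e' x j -> deg e' j = b) ->
    deg e' y = b /\ forall k, e' y k -> deg e' k = a.
  move=> x y a' b' exy dx hx; split; first exact: hx.
  move=> k eyk; rewrite -dx; apply: (np y k x eyk); by rewrite sym.
pose Q i := ((deg e' i == a) && [forall j, e' i j ==> (deg e' j == b)]) ||
            ((deg e' i == b) && [forall j, e' i j ==> (deg e' j == a)]).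
have Qstep : forall x y, e' x y -> Q x -> Q y.
  move=> x y exy; rewrite /Q => /orP[]/andP[/eqP dx /forallP hx].
  - have [dy hy] := step x y a b exy dx (fun j ej => eqP (implyP (hx j) ej)).
    apply/orP; right; rewrite dy eqxx /=; apply/forallP => k; apply/implyP => ek.
    by rewrite hy.
  - have [dy hy] := step x y b a exy dx (fun j ej => eqP (implyP (hx j) ej)).
    apply/orP; left; rewrite dy eqxx /=; apply/forallP => k; apply/implyP => ek.
    by rewrite hy.
have cl : closed e' [pred i | Q i].
  move=> x y exy; rewrite !inE; apply/idP/idP; first exact: Qstep.
  by apply: Qstep; rewrite sym.
have Q0 : Q v0.
  apply/orP; left; rewrite eqxx /=; apply/forallP => j; apply/implyP => ej.
  by rewrite (np _ _ _ ej (hnbr v0)).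
have allQ : forall i, Q i.
  by move=> i; have := closed_connect cl (conn v0 i); rewrite !inE Q0.
have [ab|ab] := eqVneq a b.
  left; exists a => i; have := allQ i; rewrite /Q -ab orbb => /andP[/eqP -> _] //.
right; exists [set i | deg e' i == a]; split.
  move=> i j eij; rewrite !inE; have := allQ i; rewrite /Q => /orP[]/andP[/eqP di /forallP hi].
    have := implyP (hi j) eij => /eqP ->; rewrite di eqxx.
    by rewrite [b == a]eq_sym (negbTE ab).
  have := implyP (hi j) eij => /eqP ->; rewrite di eqxx.
  by rewrite [b == a]eq_sym (negbTE ab).
move=> i j; rewrite !inE.
have dab : forall k, deg e' k != a -> deg e' k = b.
  move=> k; have := allQ k; rewrite /Q => /orP[]/andP[/eqP dk _] nk.
    by rewrite dk eqxx in nk.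
  exact: dk.
have [di|ni] := eqVneq (deg e' i) a.
  by move=> /esym /eqP dj; rewrite di dj.
move=> hj; have nj : deg e' j != a by rewrite -hj.
by rewrite (dab _ ni) (dab _ nj).
Qed.

Lemma regbireg_NP : symmetric e -> regular_graph e \/ biregular_graph e -> NP e.
Proof.
move=> sym [[d hd]|[V1 [h1 h2]]] u v w euv euw; first by rewrite !hd.
apply: h2; have := h1 _ _ euv; have := h1 _ _ euw.
by case: (u \in V1); case: (v \in V1); case: (w \in V1).
Qed.

Lemma hom_PA_NP f : nonsingular_graph R e -> symmetric e -> connected_graph e ->
  evo_hom (rwmx R e) (adjmx R e) f -> f = (fun _ => 0) \/ NP e.
Proof.
move=> ns sym conn hf.
have hC : forall i k, e i k -> rwmx R e i k != 0.
  move=> i k eik; rewrite mxE eik mul1r invr_eq0; exact: degR_neq0 eik.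
case: (hom_struct hf (unit_adj ns) sym conn hC) => [->|[s [lam [lnz heq]]]]; [by left|right].
have edge : forall i j, e i j -> lam j = (deg e i)%:R * lam i ^+ 2.
  move=> i j eij; have := heq i j; rewrite !mxE eij mul1r.
  have dn := degR_neq0 eij.
  case: (e (s i) (s j)) => /=; last first.
    by move/eqP; rewrite mulr0 mulf_eq0 invr_eq0 (negbTE dn) (negbTE (lnz j)).
  rewrite mulr1 => <-; rewrite mulrA divff ?mul1r //.
move=> u v w euv euw.
have key : forall x, e u x -> (deg e x)%:R * ((deg e u)%:R ^+ 2 * lam u ^+ 3) = 1 :> R.
  move=> x eux; have exu : e x u by rewrite sym.
  have h1 := edge x u exu; have h2 := edge u x eux.
  apply: (mulfI (lnz u)); rewrite mulr1 [RHS]h1 h2; ring.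
apply/eqP; rewrite -(eqr_nat R); apply/eqP.
have k1 := key v euv; have k2 := key w euw.
have hX : (deg e u)%:R ^+ 2 * lam u ^+ 3 != 0 :> R.
  by apply/eqP => h; move: k1; rewrite h mulr0 => /eqP; rewrite eq_sym oner_eq0.
by apply: (mulIf hX); rewrite k1 k2.
Qed.

Lemma hom_AP_NP f : nonsingular_graph R e -> symmetric e -> connected_graph e ->
  evo_hom (adjmx R e) (rwmx R e) f -> f = (fun _ => 0) \/ NP e.
Proof.
move=> ns sym conn hf.
have hC : forall i k, e i k -> adjmx R e i k != 0.
  by move=> i k eik; rewrite mxE eik oner_eq0.
case: (hom_struct hf (unit_rw ns) sym conn hC) => [->|[s [lam [lnz heq]]]]; [by left|right].
have edge : forall i j, e i j -> e (s i) (s j) /\ lam j * (deg e (s i))%:R = lam i ^+ 2.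
  move=> i j eij; have := heq i j; rewrite !mxE eij mul1r.
  case esij: (e (s i) (s j)) => /=; last first.
    by move/eqP; rewrite mul0r mulr0 (negbTE (lnz j)).
  have dn := degR_neq0 esij.
  by rewrite mul1r => ->; split => //; rewrite -mulrA mulVf ?mulr1.
have back : forall i j, e (s i) (s j) -> e i j.
  move=> i j esij; have := heq i j; rewrite !mxE esij mul1r.
  have dn := degR_neq0 esij.
  case: (e i j) => //=; rewrite mul0r => /eqP; rewrite eq_sym mulf_eq0 invr_eq0.
  by rewrite (negbTE dn) expf_eq0 (negbTE (lnz i)) andbF.
suff gen : forall j i k, e (s j) (s i) -> e (s j) (s k) -> deg e (s i) = deg e (s k).
  move=> u v w euv euw.
  have := gen ((s^-1)%g u) ((s^-1)%g v) ((s^-1)%g w); rewrite !permKV; exact.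
move=> j i k eji ejk.
have key : forall i, e (s j) (s i) ->
    (deg e (s i))%:R * (deg e (s j))%:R ^+ 2 = lam j ^+ 3 :> R.
  move=> x ejx; have ex : e j x := back _ _ ejx.
  have exj : e x j by rewrite sym.
  have [_ h1] := edge _ _ exj; have [_ h2] := edge _ _ ex.
  apply: (mulfI (lnz j)).
  have -> : lam j * lam j ^+ 3 = (lam j ^+ 2) ^+ 2 by ring.
  by rewrite -h2 exprMn -h1; ring.
have k1 := key i eji; have k2 := key k ejk.
have dj : (deg e (s j))%:R ^+ 2 != 0 :> R by rewrite expf_eq0 negb_and (degR_neq0 eji) orbT.
apply/eqP; rewrite -(eqr_nat R); apply/eqP.
by apply: (mulIf dj); rewrite k1 k2.
Qed.

Lemma NP_iso : nonsingular_graph R e -> symmetric e -> NP e ->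
  evo_iso (rwmx R e) (adjmx R e).
Proof.
move=> ns sym np; have nb := nb_of_nonsing ns.
pose nbr i := odflt i [pick j | e i j].
have hnbr i : e i (nbr i).
  rewrite /nbr; case: pickP => [//|h]; by case: (nb i) => j; rewrite h.
pose y i : R := ((deg e i)%:R ^+ 2 * (deg e (nbr i))%:R)^-1.
have ypos : forall i, 0 < y i.
  move=> i; rewrite /y invr_gt0 mulr_gt0 // ?exprn_gt0 // ltr0n.
    exact: deg_pos (hnbr i).
  by apply: (@deg_pos _ i); rewrite sym.
have [lam lpos l3] : exists2 lam : 'I_n -> R, forall i, 0 < lam i & forall i, lam i ^+ 3 = y i.
  apply: (@fin_all_exists2 _ (fun _ => R) (fun i x => 0 < x) (fun i x => x ^+ 3 = y i)) => i; have [x x0 x3] := cbrt (ypos i); by exists x.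
have lnz : forall i, lam i != 0 by move=> i; rewrite gt_eqF.
have key : forall i l, rwmx R e i l * lam l = lam i ^+ 2 * adjmx R e i l.
  move=> i l; rewrite !mxE; case eil: (e i l) => /=; last by rewrite !mul0r mulr0.
  rewrite mul1r mulr1.
  have eli : e l i by rewrite sym.
  have dnl : deg e (nbr l) = deg e i := np l (nbr l) i (hnbr l) eli.
  have dni : deg e (nbr i) = deg e l := np i (nbr i) l (hnbr i) eil.
  have di := degR_neq0 eil; have dl := degR_neq0 eli.
  apply/eqP; rewrite -(eqrXn2 (n:=3)) //; last first.
    - by rewrite exprn_ge0 // ltW.
    - by rewrite mulr_ge0 ?invr_ge0 ?ler0n // ltW.
  apply/eqP; rewrite exprMn l3 -exprM mulnC exprM l3 /y dnl dni.
  by field; rewrite ?di ?dl.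
exists (fun u => \row_k (u 0 k * lam k)); split.
  apply: (@Bijective _ _ _ (fun u : 'rV[R]_n => \row_k (u 0 k / lam k))) => u; apply/rowP => k; rewrite !mxE.
    by rewrite mulfK.
  by rewrite divfK.
split.
  by move=> a u v; apply/rowP => k; rewrite !mxE; ring.
move=> u v; apply/rowP => l; rewrite !mxE mulr_suml; apply: eq_bigr => i _.
transitivity (u 0 i * v 0 i * (rwmx R e i l * lam l)); first by rewrite mulrA.
by rewrite key !mxE; ring.
Qed.

End Graph.

Theorem theorem2p3 (R : realType) (n : nat) (e : rel 'I_n) :
  simple_graph e -> connected_graph e -> nonsingular_graph R e ->
  (evo_iso (rwmx R e) (adjmx R e) <-> (regular_graph e \/ biregular_graph e)) /\
  (~ evo_iso (rwmx R e) (adjmx R e) ->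
     (forall f, evo_hom (rwmx R e) (adjmx R e) f -> f = (fun _ => 0)) /\
     (forall f, evo_hom (adjmx R e) (rwmx R e) f -> f = (fun _ => 0))).
Proof.
move=> [sym irr] conn ns.
have iff1 : evo_iso (rwmx R e) (adjmx R e) <-> NP e.
  split; last exact: NP_iso.
  move=> [f [bf hf]]; case: (hom_PA_NP ns sym conn hf) => // f0.
  move=> u v w _ _; exfalso.
  have : f (delta_mx 0 u) = f 0 by rewrite f0.
  move/(bij_inj bf)/rowP/(_ u); rewrite !mxE !eqxx /= => /eqP.
  by rewrite oner_eq0.
split.
  rewrite iff1; split; first exact: NP_regbireg (nb_of_nonsing ns).
  exact: regbireg_NP.
move=> niso; split => f hf.
  by case: (hom_PA_NP ns sym conn hf) => // /iff1.
by case: (hom_AP_NP ns sym conn hf) => // /iff1.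
Qed.
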